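(* Let $s\ge r$ be positive integers and let $Q$ be drawn from the uniform (Haar) measure on $V_r(\mathbb{R}^s)$. Then for any sets $S,U\subseteq[s]$ and $T,V\subseteq[r]$ with $|S|=|T|=i$ and $|U|=|V|=\ell$, \[ \mathbb{E}_Q\big[[Q]_{S,T}[Q]_{U,V}\big]=\frac{1}{\binom{s}{i}}\,\mathbf{1}[S=U]\,\mathbf{1}[T=V]. \]
   Context: $V_r(\mathbb{R}^s)$ (the Stiefel manifold) is the set of real $s\times r$ matrices with orthonormal columns, with its uniform (Haar) probability measure, invariant under left multiplication by $s\times s$ orthogonal matrices and right multiplication by $r\times r$ orthogonal matrices. For a matrix $C$ and index sets $S,T$ with $|S|=|T|$, $[C]_{S,T}=\det(\{C_{ij}\}_{i\in S,j\in T})$ is the $(S,T)$-minor. $[N]=\{1,\dots,N\}$. *)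

(* Defs.v *)
From HB Require Import structures.
From mathcomp Require Import all_boot all_order all_algebra.
From mathcomp Require Import all_classical all_reals all_analysis.
Set Implicit Arguments. Unset Strict Implicit. Unset Printing Implicit Defensive.
Import Order.TTheory GRing.Theory Num.Theory.
Local Open Scope classical_set_scope.
Local Open Scope ring_scope.

(* The (S,T)-minor [C]_{S,T}: determinant of the submatrix with rows in S and
   columns in T, both taken in increasing order (enum of an ordinal set is
   increasing). Defined to be 0 when |S| <> |T| (never used in that case). *)
Definition minor (R : comNzRingType) (m n : nat) (C : 'M[R]_(m, n))
  (S : {set 'I_m}) (T : {set 'I_n}) : R :=
  match #|T| =P #|S| with
  | ReflectT h =>
      \det (\matrix_(a < #|S|, b < #|S|)
              C (enum_val a) (enum_val (cast_ord (esym h) b)))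
  | ReflectF _ => 0
  end.

Definition stiefel (R : realType) (s r : nat) : set 'M[R]_(s, r) :=
  [set Q | Q^T *m Q = 1%:M].

Definition orthogonal_mx (R : realType) (n : nat) (O : 'M[R]_n) : Prop :=
  O^T *m O = 1%:M.

(* The Borel sigma-algebra on s x r real matrices: generated by the entry maps. *)
Definition mx_measurable (R : realType) (s r : nat) (A : set 'M[R]_(s, r)) : Prop :=
  <<s [set B | exists (i : 'I_s) (j : 'I_r) (C : set R),
         measurable C /\ B = (fun M : 'M[R]_(s, r) => M i j) @^-1` C] >> A.

(* Q : Omega -> matrices is a random matrix, distributed according to the Haar
   (uniform) probability measure on V_r(R^s): it takes values in the Stiefel
   manifold, is measurable, and its law is invariant under left multiplication by
   s x s orthogonal matrices and right multiplication by r x r orthogonal ones. *)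
Definition haar_stiefel (R : realType) (d : measure_display) (Omega : measurableType d)
  (P : probability Omega R) (s r : nat) (Q : Omega -> 'M[R]_(s, r)) : Prop :=
  [/\ forall w, stiefel (Q w),
      forall A, mx_measurable A -> measurable (Q @^-1` A)
    & forall (O1 : 'M[R]_s) (O2 : 'M[R]_r), orthogonal_mx O1 -> orthogonal_mx O2 ->
        forall A, mx_measurable A ->
          P ((fun w => O1 *m Q w *m O2) @^-1` A) = P (Q @^-1` A)].

(* Main.v *)
Require Import Defs.
From HB Require Import structures.
From mathcomp Require Import all_boot all_order all_algebra.
From mathcomp Require Import all_classical all_reals all_analysis.
From mathcomp Require Import all_fingroup measurable_realfun.
From mathcomp Require Import lra.
Import Order.TTheory GRing.Theory Num.Theory.
Local Open Scope ring_scope.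

Set Implicit Arguments. Unset Strict Implicit.
Section Alg.
Variable R : comNzRingType.

Lemma det_expand n m (B : 'M[R]_(n,m)) (C : 'M[R]_(m,n)) :
  \det (B *m C) = \sum_(f : {ffun 'I_n -> 'I_m}) (\prod_a B a (f a)) * \det (rowsub f C).
Proof.
rewrite /determinant.
under eq_bigr => σ _ do (under eq_bigr => a _ do rewrite mxE;
  rewrite bigA_distr_bigA /= big_distrr).
rewrite exchange_big; apply: eq_bigr => f _; rewrite big_distrr; apply: eq_bigr => σ _ /=.
rewrite big_split /= mulrCA; congr (_ * (_ * _)).
by apply: eq_bigr => a _; rewrite mxE.
Qed.

Lemma det_rowsub_perm n m (f : 'I_n -> 'I_m) (τ : 'S_n) (C : 'M[R]_(m,n)) :
  \det (rowsub (f \o τ) C) = (-1) ^+ τ * \det (rowsub f C).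
Proof.
have -> : rowsub (f \o τ) C = perm_mx τ *m rowsub f C.
  by rewrite -row_permE; apply/matrixP => a b; rewrite !mxE.
by rewrite det_mulmx det_perm.
Qed.

Lemma det_avg n m (B : 'M[R]_(n,m)) (C : 'M[R]_(m,n)) :
  \det (B *m C) *+ n`! =
  \sum_(f : {ffun 'I_n -> 'I_m}) \det (colsub f B) * \det (rowsub f C).
Proof.
have H (τ : 'S_n) : \det (B *m C) = \sum_(f : {ffun 'I_n -> 'I_m})
   (-1) ^+ τ * (\prod_a B a (f (τ a))) * \det (rowsub f C).
  rewrite det_expand (reindex_inj (h := fun f : {ffun 'I_n -> 'I_m} => [ffun a => f (τ a)])) /=; last first.
    move=> f g /ffunP E; apply/ffunP => x; have := E (τ^-1 x)%g.
    by rewrite !ffunE permKV.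
  apply: eq_bigr => f _.
  have -> : rowsub [ffun a => f (τ a)] C = rowsub (f \o τ) C.
    by apply/matrixP => a b; rewrite !mxE ffunE.
  rewrite det_rowsub_perm mulrCA mulrA; congr (_ * _ * _).
  by apply: eq_bigr => a _; rewrite ffunE.
rewrite -card_Sn -sumr_const.
under eq_bigr => τ _ do rewrite (H τ).
rewrite exchange_big; apply: eq_bigr => f _.
rewrite -big_distrl /=; congr (_ * _).
by rewrite /determinant; apply: eq_bigr => τ _; congr (_ * _); apply: eq_bigr => a _; rewrite mxE.
Qed.

End Alg.
Lemma perm_ext (s i : nat) (x0 : 'I_s) (h : (i <= s)%N) (φ : 'I_i -> 'I_s)
  (injφ : injective φ) : exists p : 'S_s, forall a, p (widen_ord h a) = φ a.
Proof.
pose L1 := [seq φ a | a <- enum 'I_i].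
pose L := L1 ++ [seq x <- enum 'I_s | x \notin L1].
have uL : uniq L.
  rewrite cat_uniq (map_inj_uniq injφ) enum_uniq filter_uniq ?enum_uniq //=.
  by rewrite andbT; apply/hasPn => x; rewrite mem_filter => /andP[].
have sL : size L = s.
  have pL : perm_eq L (enum 'I_s).
    apply: uniq_perm; [exact: uL | exact: enum_uniq | ].
    move=> x; rewrite mem_enum mem_cat mem_filter mem_enum andbT.
    by case: (x \in L1).
  by rewrite (perm_size pL) size_enum_ord.
pose p (k : 'I_s) := nth x0 L k.
have pinj : injective p.
  move=> k1 k2; rewrite /p => /eqP; rewrite nth_uniq ?sL //.
  by move/eqP/val_inj.
exists (perm pinj) => a; rewrite permE /p /= nth_cat size_map size_enum_ord ltn_ord.
by rewrite (nth_map a) ?size_enum_ord // ; congr φ; apply: val_inj; rewrite /= nth_enum_ord.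
Qed.

Lemma perm_ext2 (s i : nat) (x0 : 'I_s) (φ ψ : 'I_i -> 'I_s)
  (injφ : injective φ) (injψ : injective ψ) : exists σ : 'S_s, forall a, σ (ψ a) = φ a.
Proof.
have h : (i <= s)%N by rewrite -(card_ord i) -(card_ord s); apply: leq_card injφ.
have [p1 H1] := perm_ext x0 h injφ.
have [p2 H2] := perm_ext x0 h injψ.
exists (p2^-1 * p1)%g => a; rewrite permM -H2 permK H1 //.
Qed.

Section Alg.
Variable R : comNzRingType.

Lemma det_noninj n m k (f : 'I_n -> 'I_m) (e : 'I_n -> 'I_k) (M : 'M[R]_(m,k)) :
  ~~ injectiveb f -> \det (\matrix_(a, b) M (f a) (e b)) = 0.
Proof.
move/injectivePn => [a1 [a2 neq eq]]; apply: (determinant_alternate neq).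
by move=> b; rewrite !mxE eq.
Qed.
End Alg.

Section Alg3.
Variable R : comNzRingType.
Lemma sum_sq (s r i : nat) (M : 'M[R]_(s,r)) (e : 'I_i -> 'I_r) (inje : injective e)
  (hM : M^T *m M = 1%:M) :
  \sum_(f : {ffun 'I_i -> 'I_s}) (\det (\matrix_(a,b) M (f a) (e b))) ^+ 2 = i`!%:R.
Proof.
pose A := \matrix_(x < s, b < i) M x (e b).
have hA : A^T *m A = 1%:M.
  apply/matrixP => a b.
  have := congr1 (fun X : 'M[R]_r => X (e a) (e b)) hM; rewrite /= !mxE (inj_eq inje) => <-.
  by apply: eq_bigr => k _; rewrite !mxE.
have := det_avg A^T A; rewrite hA det1 => ->.
apply: eq_bigr => f _.
have -> : colsub f A^T = (rowsub f A)^T by apply/matrixP => a b; rewrite !mxE.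
rewrite det_tr expr2.
have -> : rowsub f A = \matrix_(a,b) M (f a) (e b) by apply/matrixP => a b; rewrite !mxE.
by [].
Qed.
End Alg3.
Section Min.
Variable R : comNzRingType.
Variables s r : nat.

Lemma minorE (M : 'M[R]_(s,r)) (S : {set 'I_s}) (T : {set 'I_r}) i (x0 : 'I_s) (y0 : 'I_r) :
  #|S| = i -> #|T| = i ->
  minor M S T = \det (\matrix_(a < i, b < i) M (nth x0 (enum S) a) (nth y0 (enum T) b)).
Proof.
move=> hS hT; rewrite /minor; case: eqP => [h|]; last by rewrite hS hT.
subst i; congr (\det _); apply/matrixP => a b.
by rewrite !mxE (enum_val_nth x0) (enum_val_nth y0).
Qed.

Lemma big_cast (n1 n2 : nat) (h : n1 = n2) (F : 'I_n1 -> R) :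
  \prod_(b < n2) F (cast_ord (esym h) b) = \prod_(k < n1) F k.
Proof.
rewrite (reindex (cast_ord h)) /=; last by exists (cast_ord (esym h)) => x _;
  [exact: cast_ordK | exact: cast_ordKV].
by apply: eq_bigr => k _; rewrite cast_ordK.
Qed.

Lemma minor_col (M : 'M[R]_(s,r)) (d : 'rV[R]_r) (S : {set 'I_s}) (T : {set 'I_r}) :
  minor (M *m diag_mx d) S T = (\prod_(j in T) d 0 j) * minor M S T.
Proof.
rewrite /minor; case: eqP => h; last by rewrite mulr0.
set X := \matrix_(a, b) M (enum_val a) (enum_val (cast_ord (esym h) b)).
have -> : \matrix_(a, b) (M *m diag_mx d) (enum_val a) (enum_val (cast_ord (esym h) b))
   = X *m diag_mx (\row_b d 0 (enum_val (cast_ord (esym h) b))).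
  by rewrite mul_mx_diag mul_mx_diag; apply/matrixP => a b; rewrite !mxE.
rewrite det_mulmx det_diag mulrC; congr (_ * _).
rewrite [RHS]big_enum_val /= -(big_cast h).
by apply: eq_bigr => b _; rewrite mxE.
Qed.

Lemma minor_row (M : 'M[R]_(s,r)) (d : 'rV[R]_s) (S : {set 'I_s}) (T : {set 'I_r}) :
  minor (diag_mx d *m M) S T = (\prod_(x in S) d 0 x) * minor M S T.
Proof.
rewrite /minor; case: eqP => h; last by rewrite mulr0.
set X := \matrix_(a, b) M (enum_val a) (enum_val (cast_ord (esym h) b)).
have -> : \matrix_(a, b) (diag_mx d *m M) (enum_val a) (enum_val (cast_ord (esym h) b))
   = diag_mx (\row_a d 0 (enum_val a)) *m X.
  by rewrite mul_diag_mx mul_diag_mx; apply/matrixP => a b; rewrite !mxE.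
rewrite det_mulmx det_diag; congr (_ * _).
rewrite [RHS]big_enum_val /=.
by apply: eq_bigr => b _; rewrite mxE.
Qed.

Lemma prod_sign (n : nat) (A : {set 'I_n}) (j0 : 'I_n) :
  \prod_(j in A) (if j == j0 then -1 else 1 : R) = if j0 \in A then -1 else 1.
Proof.
case: ifP => hj.
  rewrite (bigD1 j0) //= eqxx big1 ?mulr1 // => j /andP[_ /negbTE ->] //.
by rewrite big1 // => j hjA; case: eqP => // E; rewrite -E hjA in hj.
Qed.
End Min.
Local Open Scope classical_set_scope.
Definition mxT (R : realType) (s r : nat) := 'M[R]_(s,r).
HB.instance Definition _ (R : realType) (s r : nat) := Choice.on (mxT R s r).
HB.instance Definition _ (R : realType) (s r : nat) := isPointed.Build (mxT R s r) (0 : 'M[R]_(s,r)).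
Definition Gs (R : realType) (s r : nat) : set (set (mxT R s r)) :=
  [set B | exists (i : 'I_s) (j : 'I_r) (C : set R),
         measurable C /\ B = (fun M : 'M[R]_(s, r) => M i j) @^-1` C].

Section Meas.
Variable R : realType.
Variables s r : nat.
Local Notation MT := (g_sigma_algebraType (@Gs R s r)).

Lemma mx_measurableE (A : set MT) : mx_measurable A = measurable A.
Proof. by []. Qed.

Lemma meas_entry i j : measurable_fun setT (fun M : MT => M i j).
Proof.
move=> _ C mC; rewrite setTI; apply: sub_sigma_algebra.
by exists i, j, C.
Qed.

Lemma meas_det n (F : MT -> 'M[R]_n) :
  (forall a b, measurable_fun setT (fun M => F M a b)) ->
  measurable_fun setT (fun M => \det (F M)).
Proof.
move=> mF; rewrite /determinant.
apply: measurable_sum => σ.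
apply: measurable_funM; first exact: measurable_cst.
by apply: measurable_prod => a _; exact: mF.
Qed.

Lemma meas_lin (O1 : 'M[R]_s) (O2 : 'M[R]_r) :
  @measurable_fun _ _ MT MT setT (fun M : MT => O1 *m M *m O2).
Proof.
apply: (@measurability _ _ MT MT setT _ (@Gs R s r)) => //.
move=> _ [B [i [j [C [mC ->]]]] <-].
rewrite setTI.
have : measurable_fun setT (fun M : MT => (O1 *m M *m O2) i j).
  under eq_fun do rewrite mxE.
  apply: measurable_sum => l; apply: measurable_funM; last exact: measurable_cst.
  under eq_fun do rewrite mxE.
  apply: measurable_sum => k; apply: measurable_funM; first exact: measurable_cst.
  exact: meas_entry.
by move=> /(_ measurableT C mC); rewrite setTI; apply.
Qed.
End Meas.

Section Transfer.
Variables (R : realType) (s r : nat) (d : measure_display) (Omega : measurableType d)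
  (P : probability Omega R).
Local Notation MT := (g_sigma_algebraType (@Gs R s r)).

Lemma bounded_integrable (g : Omega -> R) (K : R) :
  measurable_fun setT g -> (forall w, `|g w| <= K) -> P.-integrable setT (EFin \o g).
Proof.
move=> mg hK; apply/integrableP; split; first exact/measurable_EFinP.
apply: (@le_lt_trans _ _ (\int[P]_(x in setT) (cst K%:E) x)%E).
  apply: ge0_le_integral => //.
  - apply/measurable_EFinP; exact: measurableT_comp.
  - by move=> x _ /=; rewrite lee_fin.
rewrite integral_cst //.
have hP1 := probability_setT P.
rewrite [X in (_ * X)%E](_ : _ = 1%E) //.
by rewrite mule1 ltry.
Qed.

Lemma transfer (Q : Omega -> MT) (mQ : measurable_fun setT Q) (O1 : 'M[R]_s) (O2 : 'M[R]_r)
  (inv : forall A : set MT, measurable A ->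
     P ((fun w => O1 *m Q w *m O2) @^-1` A) = P (Q @^-1` A))
  (f : MT -> R) (mf : measurable_fun setT f) (K : R)
  (hK : forall w, `|f (Q w)| <= K) (hK2 : forall w, `|f (O1 *m Q w *m O2)| <= K) :
  ('E_P[fun w => f (O1 *m Q w *m O2)] = 'E_P[fun w => f (Q w)])%E.
Proof.
have mQ2 : measurable_fun setT (fun w => (O1 *m Q w *m O2 : MT)).
  exact: (measurableT_comp (meas_lin O1 O2) mQ).
have mfE : measurable_fun setT (EFin \o f) by exact/measurable_EFinP.
have i1 : P.-integrable (Q @^-1` setT) ((EFin \o f) \o Q).
  rewrite preimage_setT; apply: (@bounded_integrable (f \o Q) K _ hK); exact: measurableT_comp.
have i2 : P.-integrable ((fun w => (O1 *m Q w *m O2 : MT)) @^-1` setT) ((EFin \o f) \o (fun w => (O1 *m Q w *m O2 : MT))).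
  rewrite preimage_setT; apply: (@bounded_integrable (f \o (fun w => (O1 *m Q w *m O2 : MT))) K _ hK2); exact: measurableT_comp.
have E1 := integral_pushforward mQ mfE i1 measurableT.
have E2 := integral_pushforward mQ2 mfE i2 measurableT.
rewrite preimage_setT in E1 E2.
rewrite unlock; rewrite -[LHS]E2 -[RHS]E1.
apply: eq_measure_integral => A mA _.
exact: inv.
Qed.
End Transfer.
Section Main.
Variable R : realType.

Lemma orth1 n : orthogonal_mx (1%:M : 'M[R]_n).
Proof. by rewrite /orthogonal_mx trmx1 mulmx1. Qed.

Lemma orth_perm n (σ : 'S_n) : orthogonal_mx (perm_mx σ : 'M[R]_n).
Proof. by rewrite /orthogonal_mx tr_perm_mx -perm_mxM mulVg perm_mx1. Qed.

Lemma orth_sign n (j0 : 'I_n) :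
  orthogonal_mx (diag_mx (\row_j (if j == j0 then -1 else 1) : 'rV[R]_n)).
Proof.
rewrite /orthogonal_mx tr_diag_mx mul_mx_diag; apply/matrixP => a b; rewrite !mxE.
case: (eqVneq a b) => [<-|]; last by rewrite mul0r.
by rewrite mulr1n; case: (a == j0); rewrite ?mulrNN mulr1.
Qed.

Lemma stiefel_mul s r (O1 : 'M[R]_s) (O2 : 'M[R]_r) M :
  orthogonal_mx O1 -> orthogonal_mx O2 -> stiefel M -> stiefel (O1 *m M *m O2).
Proof.
rewrite /orthogonal_mx /stiefel /= => h1 h2 hM.
rewrite !trmx_mul -!mulmxA (mulmxA O1^T) h1 mul1mx (mulmxA M^T) hM mul1mx h2 //.
Qed.

Lemma inj_nth (r i : nat) (T : {set 'I_r}) (y0 : 'I_r) :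
  #|T| = i -> injective (fun b : 'I_i => nth y0 (enum T) b).
Proof.
move=> hT b1 b2 /eqP; rewrite nth_uniq ?enum_uniq // -?cardE ?hT //.
by move/eqP/val_inj.
Qed.

Lemma g_sq_le s r i (M : 'M[R]_(s,r)) (e : 'I_i -> 'I_r) (inje : injective e)
  (hM : stiefel M) (f : {ffun 'I_i -> 'I_s}) :
  (\det (\matrix_(a,b) M (f a) (e b))) ^+ 2 <= i`!%:R.
Proof.
rewrite -(sum_sq inje hM) (bigD1 f) //= lerDl sumr_ge0 // => g _; exact: sqr_ge0.
Qed.

Lemma abs_le_of_sq (x K : R) : x ^+ 2 <= K -> 1 <= K -> `|x| <= K.
Proof.
move=> h1 h2; have h3 : `|x| ^+ 2 = x ^+ 2 by rewrite real_normK // num_real.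
have h4 : 0 <= `|x| by [].
nra.
Qed.

Lemma minor_sq_le s r (M : 'M[R]_(s,r)) (hM : stiefel M) (S : {set 'I_s}) (T : {set 'I_r}) i (x0 : 'I_s) (y0 : 'I_r) :
  #|S| = i -> #|T| = i -> minor M S T ^+ 2 <= i`!%:R.
Proof.
move=> hS hT; rewrite (@minorE _ _ _ M S T i x0 y0 hS hT).
have := g_sq_le (@inj_nth _ _ T y0 hT) hM [ffun a : 'I_i => nth x0 (enum S) a].
suff -> : \matrix_(a < i,b < i) M (nth x0 (enum S) a) (nth y0 (enum T) b) =
  \matrix_(a < i,b < i) M ([ffun a : 'I_i => nth x0 (enum S) a] a) (nth y0 (enum T) b) by [].
by apply/matrixP => a b; rewrite !mxE ffunE.
Qed.

Lemma minor_abs_le s r (M : 'M[R]_(s,r)) (hM : stiefel M) (S : {set 'I_s}) (T : {set 'I_r}) (x0 : 'I_s) (y0 : 'I_r) :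
  `|minor M S T| <= (#|T|)`!%:R.
Proof.
case: (eqVneq #|S| #|T|) => h.
  apply: abs_le_of_sq; first exact: (minor_sq_le hM x0 y0 h).
  by rewrite ler1n fact_gt0.
rewrite /minor; case: eqP => [h'|_]; first by rewrite h' eqxx in h.
by rewrite normr0 ler0n.
Qed.

Lemma meas_minor s r (S : {set 'I_s}) (T : {set 'I_r}) :
  measurable_fun setT (fun M : g_sigma_algebraType (@Gs R s r) => minor M S T).
Proof.
rewrite /minor; case: eqP => h; last exact: measurable_cst.
apply: meas_det => a b; under eq_fun do rewrite mxE; exact: meas_entry.
Qed.

End Main.
Unset Implicit Arguments. Set Strict Implicit.
Local Notation MTy R s r := (g_sigma_algebraType (@Gs R s r)).

Lemma finN_eq0 (R : realType) (x : \bar R) : x \is a fin_num -> (- x = x)%E -> x = 0%E.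
Proof. by case: x => //= y _ [hy]; congr (_%:E); lra. Qed.

Theorem mainTheorem7 (R : realType) (d : measure_display) (Omega : measurableType d)
  (P : probability Omega R) (s r : nat) (Q : Omega -> 'M[R]_(s, r)) :
  (0 < r)%N -> (r <= s)%N -> haar_stiefel P Q ->
  forall (S U : {set 'I_s}) (T V : {set 'I_r}) (i l : nat),
    #|S| = i -> #|T| = i -> #|U| = l -> #|V| = l ->
    ('E_P[fun w => (minor (Q w) S T * minor (Q w) U V)%R]
     = ((('C(s, i))%:R)^-1 * (S == U)%:R * (T == V)%:R)%R%:E)%E.
Proof.
move=> hr hrs [hst hmeas hinv] S U T V i l hS hT hU hV.
pose x0 : 'I_s := Ordinal (leq_trans hr hrs).
pose y0 : 'I_r := Ordinal hr.
have mQ : measurable_fun setT (Q : Omega -> MTy R s r).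
  by move=> _ A mA; rewrite setTI; exact: hmeas.
have hinv' (O1 : 'M[R]_s) (O2 : 'M[R]_r) : orthogonal_mx O1 -> orthogonal_mx O2 ->
    forall A : set (MTy R s r), measurable A ->
    P ((fun w => O1 *m Q w *m O2) @^-1` A)%classic = P (Q @^-1` A)%classic.
  by move=> h1 h2 A mA; exact: hinv.
have stQ (O1 : 'M[R]_s) (O2 : 'M[R]_r) w : orthogonal_mx O1 -> orthogonal_mx O2 ->
    stiefel (O1 *m Q w *m O2).
  by move=> h1 h2; exact: stiefel_mul h1 h2 (hst w).
have his : (i <= s)%N.
  by rewrite -hT (leq_trans _ hrs) // (leq_trans (max_card _)) // card_ord.
have [/andP[/eqP eSU /eqP eTV]|neq] := boolP ((S == U) && (T == V)).
  subst U V; rewrite !eqxx !mulr1.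
  pose e := fun b : 'I_i => nth y0 (enum T) b.
  have inje : injective e := @inj_nth _ _ T y0 hT.
  pose g := fun (f : {ffun 'I_i -> 'I_s}) (M : 'M[R]_(s,r)) =>
    \det (\matrix_(a < i, b < i) M (f a) (e b)).
  pose fS : {ffun 'I_i -> 'I_s} := [ffun a : 'I_i => nth x0 (enum S) a].
  have injS : injective fS.
    by move=> a1 a2; rewrite !ffunE; exact: (@inj_nth _ _ S x0 hS).
  have gmeas f : measurable_fun setT (fun M : MTy R s r => g f M ^+ 2).
    apply: measurable_funX; apply: meas_det => a b.
    by under eq_fun do rewrite mxE; exact: meas_entry.
  have gb f M : stiefel M -> `|g f M ^+ 2| <= i`!%:R.
    by move=> hM; rewrite ger0_norm ?sqr_ge0 //; exact: g_sq_le.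
  pose c f := ('E_P[fun w => (g f (Q w) ^+ 2)%R])%E.
  have cfin f : c f = (fine (c f))%:E.
    rewrite /c unlock fineK //; apply: integrable_fin_num => //.
    apply: (@bounded_integrable R d Omega P (fun w => g f (Q w) ^+ 2) (i`!%:R)).
      exact: (measurableT_comp (gmeas f) mQ).
    by move=> w; apply: gb; exact: hst.
  have cinj (f : {ffun 'I_i -> 'I_s}) : injectiveb f -> c f = c fS.
    move/injectiveP => injf.
    have [σ hσ] := perm_ext2 x0 injf injS.
    have := transfer mQ (hinv' _ _ (orth_perm R σ) (orth1 R r)) (gmeas fS)
      (fun w => gb fS _ (hst w)) (fun w => gb fS _ (stQ _ _ w (orth_perm R σ) (orth1 R r))).
    rewrite /c => <-.
    congr ('E_P[_])%E; apply/funext => w; congr (_ ^+ 2).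
    rewrite /g mulmx1 -row_permE; congr (\det _); apply/matrixP => a b.
    by rewrite !mxE hσ.
  have cnon (f : {ffun 'I_i -> 'I_s}) : ~~ injectiveb f -> c f = 0%E.
    move=> hf; rewrite /c unlock; apply: integral0_eq => w _.
    by rewrite /g det_noninj // expr0n.
  have mf (f : {ffun 'I_i -> 'I_s}) : measurable_fun setT (fun w => ((g f (Q w) ^+ 2)%:E)%E).
    by apply/measurable_EFinP; exact: (measurableT_comp (gmeas f) mQ).
  have f0 (f : {ffun 'I_i -> 'I_s}) w : setT w -> (0 <= (g f (Q w) ^+ 2)%:E)%E.
    by move=> _; rewrite lee_fin sqr_ge0.
  have hsum : (\sum_(f : {ffun 'I_i -> 'I_s}) c f = (i`!%:R)%:E)%E.
    rewrite /c expectation.unlock.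
    transitivity (\int[P]_(w in setT) (\sum_(f : {ffun 'I_i -> 'I_s}) (g f (Q w) ^+ 2)%:E))%E.
      by symmetry; exact: (ge0_integral_sum P measurableT mf f0).
    rewrite (eq_integral (fun _ => (i`!%:R)%:E)); last first.
      by move=> w _; rewrite sumEFin /g (sum_sq inje (hst w)).
    rewrite integral_cst //; rewrite [X in (_ * X)%E](_ : _ = 1%E) ?mule1 //.
    exact: probability_setT.
  have hsum2 : (\sum_(f : {ffun 'I_i -> 'I_s}) c f = c fS *+ s ^_ i)%E.
    rewrite (bigID (fun f : {ffun 'I_i -> 'I_s} => injectiveb f)) /= [X in (_ + X)%E]big1; last by move=> f /cnon.
    rewrite adde0 (eq_bigr (fun _ => c fS)); last by move=> f /cinj.
    rewrite sumr_const.
    congr (_ *+ _).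
    have := card_inj_ffuns 'I_i 'I_s; rewrite !card_ord => <-.
    by apply: eq_card => f; rewrite inE.
  have hfin := cfin fS.
  have hn : fine (c fS) *+ s ^_ i = i`!%:R.
    by apply: EFin_inj; rewrite EFin_natmul -hfin -hsum2 hsum.
  have gS M : minor M S T = g fS M.
    rewrite (minorE M x0 y0 hS hT) /g; congr (\det _); apply/matrixP => a b.
    by rewrite !mxE ffunE.
  rewrite (_ : (fun w => _) = (fun w => g fS (Q w) ^+ 2)); last first.
    by apply/funext => w; rewrite gS expr2.
  rewrite -/(c fS) hfin; congr (_%:E).
  have hC : ('C(s, i)%:R : R) != 0 by rewrite pnatr_eq0 -lt0n bin_gt0.
  have hF : (i`!%:R : R) != 0 by rewrite pnatr_eq0 -lt0n fact_gt0.
  have {}hn : fine (c fS) * ('C(s,i)%:R * i`!%:R) = i`!%:R by rewrite -natrM bin_ffact mulr_natr.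
  have h1 : fine (c fS) * 'C(s, i)%:R = 1.
    by apply: (mulIf hF); rewrite mul1r -mulrA.
  by apply: (mulIf hC); rewrite h1 mulVf.
have -> : ('C(s, i)%:R^-1 * (S == U)%:R * (T == V)%:R : R) = 0.
  by move: neq; case: (S == U); case: (T == V) => //= _; rewrite ?mulr0 ?mul0r.
pose F := fun M : 'M[R]_(s,r) => minor M S T * minor M U V.
have Fmeas : measurable_fun setT (F : MTy R s r -> R).
  by apply: measurable_funM; exact: meas_minor.
have Fb M : stiefel M -> `|F M| <= i`!%:R * l`!%:R.
  move=> hM; rewrite normrM; apply: ler_pM => //.
    by rewrite -hT; exact: (minor_abs_le hM S T x0 y0).
  by rewrite -hV; exact: (minor_abs_le hM U V x0 y0).
have key : exists (O1 : 'M[R]_s) (O2 : 'M[R]_r),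
    [/\ orthogonal_mx O1, orthogonal_mx O2 & forall M, F (O1 *m M *m O2) = - F M].
  case: (eqVneq T V) => [eTV|nTV].
    have nSU : S != U by move: neq; rewrite eTV eqxx andbT.
    have [x1 hx1] : exists x1, (x1 \in S) != (x1 \in U).
      case: (boolP [exists x, (x \in S) != (x \in U)]) => [/existsP //|/existsPn H].
      by case/eqP: nSU; apply/setP => x; move: (H x); rewrite negbK => /eqP.
    exists (diag_mx (\row_j (if j == x1 then -1 else 1) : 'rV[R]_s)), 1%:M.
    split; [exact: orth_sign | exact: orth1 |].
    have hp (A : {set 'I_s}) : \prod_(x in A) (\row_j (if j == x1 then -1 else 1) : 'rV[R]_s) 0 x
        = if x1 \in A then -1 else 1.
      by rewrite -prod_sign; apply: eq_bigr => x _; rewrite mxE.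
    move=> M; rewrite /F mulmx1 !minor_row !hp.
    by move: hx1; case: (x1 \in S); case: (x1 \in U) => //= _;
      rewrite mulrACA ?mulr1 ?mul1r mulN1r.
  have [j0 hj0] : exists j0, (j0 \in T) != (j0 \in V).
    case: (boolP [exists x, (x \in T) != (x \in V)]) => [/existsP //|/existsPn H].
    by case/eqP: nTV; apply/setP => x; move: (H x); rewrite negbK => /eqP.
  exists 1%:M, (diag_mx (\row_j (if j == j0 then -1 else 1) : 'rV[R]_r)).
  split; [exact: orth1 | exact: orth_sign |].
  have hp (A : {set 'I_r}) : \prod_(x in A) (\row_j (if j == j0 then -1 else 1) : 'rV[R]_r) 0 x
      = if j0 \in A then -1 else 1.
    by rewrite -prod_sign; apply: eq_bigr => x _; rewrite mxE.
  move=> M; rewrite /F mul1mx !minor_col !hp.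
  by move: hj0; case: (j0 \in T); case: (j0 \in V) => //= _;
    rewrite mulrACA ?mulr1 ?mul1r mulN1r.
case: key => A1 [A2 [h1 h2 hF]].
have Fint : P.-integrable setT (EFin \o (fun w => F (Q w))).
  apply: (@bounded_integrable R d Omega P (fun w => F (Q w)) (i`!%:R * l`!%:R)).
    exact: (measurableT_comp Fmeas mQ).
  by move=> w; apply: Fb; exact: hst.
have Xf := integrable_fin_num measurableT Fint.
have := transfer mQ (hinv' _ _ h1 h2) Fmeas (fun w => Fb _ (hst w))
  (fun w => Fb _ (stQ _ _ w h1 h2)).
rewrite (_ : (fun w => F (A1 *m Q w *m A2)) = (fun w => - F (Q w))); last first.
  by apply/funext => w; rewrite hF.
rewrite expectation.unlock.
under eq_integral do rewrite EFinN.
rewrite integralN; last exact: integrable_add_def.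
move=> hX; apply: finN_eq0; [exact: Xf | exact: hX].
Qed.
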